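(* If $A$ contains at least two atoms, then the axioms of $\mathrm{EqFSCL}^-$ are independent: for each equation $e\in\mathrm{EqFSCL}^-$, $e$ is not derivable in equational logic from $\mathrm{EqFSCL}^-\setminus\{e\}$ (equivalently, there is a $\Sigma_{SCL}(A)$-algebra satisfying all of $\mathrm{EqFSCL}^-\setminus\{e\}$ but not $e$).
   Context: The signature $\Sigma_{SCL}(A)$, for a set $A$ of atoms, has constants $\mathsf T,\mathsf F$, each $a\in A$ as a constant, unary $\neg$, binary $\land^\circ$ and $\lor^\circ$. $\mathrm{EqFSCL}^-$ consists of the eight equations (variables $x,y,z$): (F2) $x\lor^\circ y=\neg(\neg x\land^\circ\neg y)$; (F4) $\mathsf T\land^\circ x=x$; (F5) $x\lor^\circ\mathsf F=x$; (F6) $\mathsf F\land^\circ x=\mathsf F$; (F7) $(x\land^\circ y)\land^\circ z=x\land^\circ(y\land^\circ z)$; (F8) $\neg x\land^\circ\mathsf F=x\land^\circ\mathsf F$; (F9) $(x\land^\circ\mathsf F)\lor^\circ y=(x\lor^\circ\mathsf T)\land^\circ y$; (F10) $(x\land^\circ y)\lor^\circ(z\land^\circ\mathsf F)=(x\lor^\circ(z\land^\circ\mathsf F))\land^\circ(y\lor^\circ(z\land^\circ\mathsf F))$. *)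

(* Defs.v *)
Inductive term (A : Type) : Type :=
| Var : nat -> term A
| Tt : term A
| Ff : term A
| Atom : A -> term A
| Neg : term A -> term A
| AndL : term A -> term A -> term A
| OrL : term A -> term A -> term A.

Arguments Var {A} _.
Arguments Tt {A}.
Arguments Ff {A}.
Arguments Atom {A} _.
Arguments Neg {A} _.
Arguments AndL {A} _ _.
Arguments OrL {A} _ _.

Definition equation (A : Type) : Type := (term A * term A)%type.

Fixpoint subst {A : Type} (s : nat -> term A) (t : term A) : term A :=
  match t with
  | Var n => s n
  | Tt => Tt
  | Ff => Ff
  | Atom a => Atom a
  | Neg u => Neg (subst s u)
  | AndL u v => AndL (subst s u) (subst s v)
  | OrL u v => OrL (subst s u) (subst s v)
  end.

Inductive derivable {A : Type} (E : equation A -> Prop) : term A -> term A -> Prop :=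
| d_ax : forall l r (s : nat -> term A), E (l, r) -> derivable E (subst s l) (subst s r)
| d_refl : forall t, derivable E t t
| d_sym : forall t u, derivable E t u -> derivable E u t
| d_trans : forall t u v, derivable E t u -> derivable E u v -> derivable E t v
| d_neg : forall t u, derivable E t u -> derivable E (Neg t) (Neg u)
| d_and : forall t t' u u', derivable E t t' -> derivable E u u' ->
    derivable E (AndL t u) (AndL t' u')
| d_or : forall t t' u u', derivable E t t' -> derivable E u u' ->
    derivable E (OrL t u) (OrL t' u').

Inductive axname : Type := F2 | F4 | F5 | F6 | F7 | F8 | F9 | F10.

Section EqDefs.
Context {A : Type}.
Let x : term A := Var 0.
Let y : term A := Var 1.
Let z : term A := Var 2.

Definition ax (n : axname) : equation A :=
  match n with
  | F2 => (OrL x y, Neg (AndL (Neg x) (Neg y)))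
  | F4 => (AndL Tt x, x)
  | F5 => (OrL x Ff, x)
  | F6 => (AndL Ff x, Ff)
  | F7 => (AndL (AndL x y) z, AndL x (AndL y z))
  | F8 => (AndL (Neg x) Ff, AndL x Ff)
  | F9 => (OrL (AndL x Ff) y, AndL (OrL x Tt) y)
  | F10 => (OrL (AndL x y) (AndL z Ff),
            AndL (OrL x (AndL z Ff)) (OrL y (AndL z Ff)))
  end.
End EqDefs.

Definition EqFSCL_without {A : Type} (e : axname) : equation A -> Prop :=
  fun q => exists e', e' <> e /\ q = ax e'.

(* Main.v *)
Require Import Defs.

Section Indep.
Variable A : Type.

Record alg := { car : Type; aT : car; aF : car; aN : car -> car;
  aA : car -> car -> car; aO : car -> car -> car }.

Fixpoint ev (M : alg) (v : nat -> car M) (t : term A) : car M :=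
  match t with
  | Var n => v n
  | Tt => aT M
  | Ff => aF M
  | Atom _ => aT M
  | Neg u => aN M (ev M v u)
  | AndL u w => aA M (ev M v u) (ev M v w)
  | OrL u w => aO M (ev M v u) (ev M v w)
  end.

Lemma ev_subst (M : alg) v s t : ev M v (subst s t) = ev M (fun n => ev M v (s n)) t.
Proof. induction t; simpl; congruence. Qed.

Lemma sound (M : alg) (e : axname)
  (HE : forall e', e' <> e -> forall v, ev M v (fst (@ax A e')) = ev M v (snd (@ax A e'))) :
  forall t u, derivable (@EqFSCL_without A e) t u -> forall v, ev M v t = ev M v u.
Proof.
  intros t u H; induction H; intro w; simpl; try congruence.
  destruct H as [e' [ne Heq]].
  rewrite !ev_subst.
  assert (Hl : l = fst (@ax A e')) by (rewrite <- Heq; reflexivity).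
  assert (Hr : r = snd (@ax A e')) by (rewrite <- Heq; reflexivity).
  rewrite Hl, Hr. apply HE; exact ne.
Qed.

Definition vf {C : Type} (a b c : C) : nat -> C :=
  fun n => match n with 0 => a | 1 => b | _ => c end.

Inductive D2 := d2_0 | d2_1.
Inductive D4 := d4_0 | d4_1 | d4_2 | d4_3.
Inductive D5 := d5_0 | d5_1 | d5_2 | d5_3 | d5_4.
Definition N_F2 (x : D2) : D2 := match x with d2_0 => d2_0 | d2_1 => d2_0 end.
Definition A_F2 (x y : D2) : D2 := match x, y with d2_0, d2_0 => d2_0 | d2_0, d2_1 => d2_1 | d2_1, d2_0 => d2_1 | d2_1, d2_1 => d2_1 end.
Definition O_F2 (x y : D2) : D2 := match x, y with d2_0, d2_0 => d2_0 | d2_0, d2_1 => d2_0 | d2_1, d2_0 => d2_0 | d2_1, d2_1 => d2_1 end.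
Definition M_F2 : alg := {| car := D2; aT := d2_0; aF := d2_1; aN := N_F2; aA := A_F2; aO := O_F2 |}.
Lemma sat_F2 : forall e', e' <> F2 -> forall v : nat -> car M_F2,
  ev M_F2 v (fst (@ax A e')) = ev M_F2 v (snd (@ax A e')).
Proof.
  intros e' ne v; destruct e'; try (exfalso; apply ne; reflexivity); cbn;
  generalize (v 0) (v 1) (v 2); intros x y z; destruct x, y, z; reflexivity.
Qed.
Lemma indep_F2 : ~ derivable (@EqFSCL_without A F2) (fst (@ax A F2)) (snd (@ax A F2)).
Proof.
  intro H. pose proof (sound M_F2 F2 (sat_F2) _ _ H (vf (C:=car M_F2) d2_1 d2_1 d2_0)) as Hv.
  cbn in Hv. discriminate Hv.
Qed.

Definition N_F4 (x : D2) : D2 := match x with d2_0 => d2_0 | d2_1 => d2_1 end.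
Definition A_F4 (x y : D2) : D2 := match x, y with d2_0, d2_0 => d2_0 | d2_0, d2_1 => d2_0 | d2_1, d2_0 => d2_1 | d2_1, d2_1 => d2_1 end.
Definition O_F4 (x y : D2) : D2 := match x, y with d2_0, d2_0 => d2_0 | d2_0, d2_1 => d2_0 | d2_1, d2_0 => d2_1 | d2_1, d2_1 => d2_1 end.
Definition M_F4 : alg := {| car := D2; aT := d2_0; aF := d2_0; aN := N_F4; aA := A_F4; aO := O_F4 |}.
Lemma sat_F4 : forall e', e' <> F4 -> forall v : nat -> car M_F4,
  ev M_F4 v (fst (@ax A e')) = ev M_F4 v (snd (@ax A e')).
Proof.
  intros e' ne v; destruct e'; try (exfalso; apply ne; reflexivity); cbn;
  generalize (v 0) (v 1) (v 2); intros x y z; destruct x, y, z; reflexivity.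
Qed.
Lemma indep_F4 : ~ derivable (@EqFSCL_without A F4) (fst (@ax A F4)) (snd (@ax A F4)).
Proof.
  intro H. pose proof (sound M_F4 F4 (sat_F4) _ _ H (vf (C:=car M_F4) d2_1 d2_0 d2_0)) as Hv.
  cbn in Hv. discriminate Hv.
Qed.

Definition N_F6 (x : D2) : D2 := match x with d2_0 => d2_0 | d2_1 => d2_1 end.
Definition A_F6 (x y : D2) : D2 := match x, y with d2_0, d2_0 => d2_0 | d2_0, d2_1 => d2_1 | d2_1, d2_0 => d2_1 | d2_1, d2_1 => d2_1 end.
Definition O_F6 (x y : D2) : D2 := match x, y with d2_0, d2_0 => d2_0 | d2_0, d2_1 => d2_1 | d2_1, d2_0 => d2_1 | d2_1, d2_1 => d2_1 end.
Definition M_F6 : alg := {| car := D2; aT := d2_0; aF := d2_0; aN := N_F6; aA := A_F6; aO := O_F6 |}.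
Lemma sat_F6 : forall e', e' <> F6 -> forall v : nat -> car M_F6,
  ev M_F6 v (fst (@ax A e')) = ev M_F6 v (snd (@ax A e')).
Proof.
  intros e' ne v; destruct e'; try (exfalso; apply ne; reflexivity); cbn;
  generalize (v 0) (v 1) (v 2); intros x y z; destruct x, y, z; reflexivity.
Qed.
Lemma indep_F6 : ~ derivable (@EqFSCL_without A F6) (fst (@ax A F6)) (snd (@ax A F6)).
Proof.
  intro H. pose proof (sound M_F6 F6 (sat_F6) _ _ H (vf (C:=car M_F6) d2_1 d2_0 d2_0)) as Hv.
  cbn in Hv. discriminate Hv.
Qed.

Definition N_F5 (x : D2) : D2 := match x with d2_0 => d2_1 | d2_1 => d2_1 end.
Definition A_F5 (x y : D2) : D2 := match x, y with d2_0, d2_0 => d2_0 | d2_0, d2_1 => d2_1 | d2_1, d2_0 => d2_1 | d2_1, d2_1 => d2_1 end.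
Definition O_F5 (x y : D2) : D2 := match x, y with d2_0, d2_0 => d2_1 | d2_0, d2_1 => d2_1 | d2_1, d2_0 => d2_1 | d2_1, d2_1 => d2_1 end.
Definition M_F5 : alg := {| car := D2; aT := d2_0; aF := d2_1; aN := N_F5; aA := A_F5; aO := O_F5 |}.
Lemma sat_F5 : forall e', e' <> F5 -> forall v : nat -> car M_F5,
  ev M_F5 v (fst (@ax A e')) = ev M_F5 v (snd (@ax A e')).
Proof.
  intros e' ne v; destruct e'; try (exfalso; apply ne; reflexivity); cbn;
  generalize (v 0) (v 1) (v 2); intros x y z; destruct x, y, z; reflexivity.
Qed.
Lemma indep_F5 : ~ derivable (@EqFSCL_without A F5) (fst (@ax A F5)) (snd (@ax A F5)).
Proof.
  intro H. pose proof (sound M_F5 F5 (sat_F5) _ _ H (vf (C:=car M_F5) d2_0 d2_0 d2_0)) as Hv.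
  cbn in Hv. discriminate Hv.
Qed.

Definition N_F7 (x : D4) : D4 := match x with d4_0 => d4_1 | d4_1 => d4_0 | d4_2 => d4_3 | d4_3 => d4_2 end.
Definition A_F7 (x y : D4) : D4 := match x, y with d4_0, d4_0 => d4_0 | d4_0, d4_1 => d4_1 | d4_0, d4_2 => d4_2 | d4_0, d4_3 => d4_3 | d4_1, d4_0 => d4_1 | d4_1, d4_1 => d4_1 | d4_1, d4_2 => d4_1 | d4_1, d4_3 => d4_1 | d4_2, d4_0 => d4_2 | d4_2, d4_1 => d4_1 | d4_2, d4_2 => d4_0 | d4_2, d4_3 => d4_0 | d4_3, d4_0 => d4_3 | d4_3, d4_1 => d4_1 | d4_3, d4_2 => d4_0 | d4_3, d4_3 => d4_0 end.
Definition M_F7 : alg := {| car := D4; aT := d4_0; aF := d4_1; aN := N_F7; aA := A_F7; aO := (fun x y => N_F7 (A_F7 (N_F7 x) (N_F7 y))) |}.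
Lemma sat_F7 : forall e', e' <> F7 -> forall v : nat -> car M_F7,
  ev M_F7 v (fst (@ax A e')) = ev M_F7 v (snd (@ax A e')).
Proof.
  intros e' ne v; destruct e'; try (exfalso; apply ne; reflexivity); cbn;
  generalize (v 0) (v 1) (v 2); intros x y z; destruct x, y, z; reflexivity.
Qed.
Lemma indep_F7 : ~ derivable (@EqFSCL_without A F7) (fst (@ax A F7)) (snd (@ax A F7)).
Proof.
  intro H. pose proof (sound M_F7 F7 (sat_F7) _ _ H (vf (C:=car M_F7) d4_2 d4_2 d4_3)) as Hv.
  cbn in Hv. discriminate Hv.
Qed.

Definition N_F8 (x : D4) : D4 := match x with d4_0 => d4_1 | d4_1 => d4_0 | d4_2 => d4_3 | d4_3 => d4_2 end.
Definition A_F8 (x y : D4) : D4 := match x, y with d4_0, d4_0 => d4_0 | d4_0, d4_1 => d4_1 | d4_0, d4_2 => d4_2 | d4_0, d4_3 => d4_3 | d4_1, d4_0 => d4_1 | d4_1, d4_1 => d4_1 | d4_1, d4_2 => d4_1 | d4_1, d4_3 => d4_1 | d4_2, d4_0 => d4_2 | d4_2, d4_1 => d4_2 | d4_2, d4_2 => d4_2 | d4_2, d4_3 => d4_2 | d4_3, d4_0 => d4_3 | d4_3, d4_1 => d4_3 | d4_3, d4_2 => d4_3 | d4_3, d4_3 => d4_3 end.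
Definition M_F8 : alg := {| car := D4; aT := d4_0; aF := d4_1; aN := N_F8; aA := A_F8; aO := (fun x y => N_F8 (A_F8 (N_F8 x) (N_F8 y))) |}.
Lemma sat_F8 : forall e', e' <> F8 -> forall v : nat -> car M_F8,
  ev M_F8 v (fst (@ax A e')) = ev M_F8 v (snd (@ax A e')).
Proof.
  intros e' ne v; destruct e'; try (exfalso; apply ne; reflexivity); cbn;
  generalize (v 0) (v 1) (v 2); intros x y z; destruct x, y, z; reflexivity.
Qed.
Lemma indep_F8 : ~ derivable (@EqFSCL_without A F8) (fst (@ax A F8)) (snd (@ax A F8)).
Proof.
  intro H. pose proof (sound M_F8 F8 (sat_F8) _ _ H (vf (C:=car M_F8) d4_2 d4_0 d4_0)) as Hv.
  cbn in Hv. discriminate Hv.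
Qed.

Definition N_F9 (x : D5) : D5 := match x with d5_0 => d5_1 | d5_1 => d5_0 | d5_2 => d5_4 | d5_3 => d5_3 | d5_4 => d5_2 end.
Definition A_F9 (x y : D5) : D5 := match x, y with d5_0, d5_0 => d5_0 | d5_0, d5_1 => d5_1 | d5_0, d5_2 => d5_2 | d5_0, d5_3 => d5_3 | d5_0, d5_4 => d5_4 | d5_1, d5_0 => d5_1 | d5_1, d5_1 => d5_1 | d5_1, d5_2 => d5_1 | d5_1, d5_3 => d5_1 | d5_1, d5_4 => d5_1 | d5_2, d5_0 => d5_2 | d5_2, d5_1 => d5_2 | d5_2, d5_2 => d5_2 | d5_2, d5_3 => d5_2 | d5_2, d5_4 => d5_2 | d5_3, d5_0 => d5_3 | d5_3, d5_1 => d5_2 | d5_3, d5_2 => d5_2 | d5_3, d5_3 => d5_2 | d5_3, d5_4 => d5_3 | d5_4, d5_0 => d5_4 | d5_4, d5_1 => d5_2 | d5_4, d5_2 => d5_2 | d5_4, d5_3 => d5_2 | d5_4, d5_4 => d5_4 end.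
Definition M_F9 : alg := {| car := D5; aT := d5_0; aF := d5_1; aN := N_F9; aA := A_F9; aO := (fun x y => N_F9 (A_F9 (N_F9 x) (N_F9 y))) |}.
Lemma sat_F9 : forall e', e' <> F9 -> forall v : nat -> car M_F9,
  ev M_F9 v (fst (@ax A e')) = ev M_F9 v (snd (@ax A e')).
Proof.
  intros e' ne v; destruct e'; try (exfalso; apply ne; reflexivity); cbn;
  generalize (v 0) (v 1) (v 2); intros x y z; destruct x, y, z; reflexivity.
Qed.
Lemma indep_F9 : ~ derivable (@EqFSCL_without A F9) (fst (@ax A F9)) (snd (@ax A F9)).
Proof.
  intro H. pose proof (sound M_F9 F9 (sat_F9) _ _ H (vf (C:=car M_F9) d5_2 d5_3 d5_0)) as Hv.
  cbn in Hv. discriminate Hv.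
Qed.

Definition N_F10 (x : D4) : D4 := match x with d4_0 => d4_1 | d4_1 => d4_0 | d4_2 => d4_2 | d4_3 => d4_3 end.
Definition A_F10 (x y : D4) : D4 := match x, y with d4_0, d4_0 => d4_0 | d4_0, d4_1 => d4_1 | d4_0, d4_2 => d4_2 | d4_0, d4_3 => d4_3 | d4_1, d4_0 => d4_1 | d4_1, d4_1 => d4_1 | d4_1, d4_2 => d4_1 | d4_1, d4_3 => d4_1 | d4_2, d4_0 => d4_2 | d4_2, d4_1 => d4_2 | d4_2, d4_2 => d4_2 | d4_2, d4_3 => d4_2 | d4_3, d4_0 => d4_3 | d4_3, d4_1 => d4_1 | d4_3, d4_2 => d4_2 | d4_3, d4_3 => d4_0 end.
Definition M_F10 : alg := {| car := D4; aT := d4_0; aF := d4_1; aN := N_F10; aA := A_F10; aO := (fun x y => N_F10 (A_F10 (N_F10 x) (N_F10 y))) |}.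
Lemma sat_F10 : forall e', e' <> F10 -> forall v : nat -> car M_F10,
  ev M_F10 v (fst (@ax A e')) = ev M_F10 v (snd (@ax A e')).
Proof.
  intros e' ne v; destruct e'; try (exfalso; apply ne; reflexivity); cbn;
  generalize (v 0) (v 1) (v 2); intros x y z; destruct x, y, z; reflexivity.
Qed.
Lemma indep_F10 : ~ derivable (@EqFSCL_without A F10) (fst (@ax A F10)) (snd (@ax A F10)).
Proof.
  intro H. pose proof (sound M_F10 F10 (sat_F10) _ _ H (vf (C:=car M_F10) d4_3 d4_3 d4_2)) as Hv.
  cbn in Hv. discriminate Hv.
Qed.

End Indep.

Theorem theorem2p8 (A : Type) (a b : A) (hab : a <> b) :
  forall e : axname,
    ~ derivable (@EqFSCL_without A e) (fst (@ax A e)) (snd (@ax A e)).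
Proof.
  intro e; destruct e.
  - apply indep_F2.
  - apply indep_F4.
  - apply indep_F5.
  - apply indep_F6.
  - apply indep_F7.
  - apply indep_F8.
  - apply indep_F9.
  - apply indep_F10.
Qed.
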